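(* Let $B_a=(\{u,v\},[h];E_a)$ and $B_b=(\{u,v\},[h];E_b)$ be bipartite graphs distributed as $(B_a,B_b)\sim ER(2,h;\mathbf p)$. Let $\mathcal E^M(B_a,B_b)$ be the event that \[ \|\mathrm{sig}'_a(v)-\mathrm{sig}'_b(u)\|\le\|\mathrm{sig}'_a(u)-\mathrm{sig}'_b(u)\|\quad\text{or}\quad \|\mathrm{sig}'_a(u)-\mathrm{sig}'_b(v)\|\le\|\mathrm{sig}'_a(v)-\mathrm{sig}'_b(v)\|. \] Then $\Pr[\mathcal E^M(B_a,B_b)]\le 2\exp(-h\rho^2)$, where \[ \rho\triangleq\sqrt{p_{00}p_{1*}+p_{11}p_{0*}}-\sqrt{p_{10}p_{0*}+p_{01}p_{1*}}. \]
   Context: $\mathbf p=(p_{11},p_{10},p_{01},p_{00})$ is a probability vector, $p_{1*}=p_{11}+p_{10}$, $p_{0*}=p_{01}+p_{00}$. Correlated bipartite model $ER(2,h;\mathbf p)$: $B_a$ and $B_b$ are bipartite graphs with left vertex set $\{u,v\}$ and right vertex set $[h]$; for each left vertex $x$ and right vertex $j$, independently over all such pairs, $(\mathbf 1[(x,j)\in E_a],\mathbf 1[(x,j)\in E_b])$ equals $(1,1),(1,0),(0,1),(0,0)$ with probabilities $p_{11},p_{10},p_{01},p_{00}$. Bipartite signature: $\mathrm{sig}'_a(x)\in\{0,1\}^h$ has $i$-th coordinate $\mathbf 1[(x,i)\in E_a]$, and $\mathrm{sig}'_b$ analogously for $B_b$. $\|\cdot\|$ denotes Hamming weight (so $\|s-t\|$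 is Hamming distance).
   Formalization: The bound $\Pr[\mathcal E^M(B_a,B_b)]\le 2\exp(-h\rho^2)$ is asserted only for probability vectors with ρ ≥ 0. The statement above fails without it. *)

(* Defs.v *)
From HB Require Import structures.
From mathcomp Require Import all_boot all_order all_algebra.
From mathcomp Require Import reals.
From mathcomp.analysis Require Import sequences exp.
Set Implicit Arguments. Unset Strict Implicit. Unset Printing Implicit Defensive.
Import Order.TTheory GRing.Theory Num.Theory.
Local Open Scope ring_scope.

(* Left vertex set {u,v} is 'I_2 with u = 0, v = 1; right vertex set [h] is 'I_h.
   An outcome of ER(2,h;p) is the joint edge-indicator pair
   (1[(x,j) in E_a], 1[(x,j) in E_b]) for every pair (x,j). *)
Definition config (h : nat) := {ffun 'I_2 * 'I_h -> bool * bool}.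

Definition vu : 'I_2 := ord0.
Definition vv : 'I_2 := ord_max.

Definition pair_prob (R : realType) (p11 p10 p01 p00 : R) (o : bool * bool) : R :=
  match o with
  | (true, true) => p11
  | (true, false) => p10
  | (false, true) => p01
  | (false, false) => p00
  end.

Definition config_prob (R : realType) (p11 p10 p01 p00 : R) h (w : config h) : R :=
  \prod_(k : 'I_2 * 'I_h) pair_prob p11 p10 p01 p00 (w k).

Definition Pr (R : realType) (p11 p10 p01 p00 : R) h (E : pred (config h)) : R :=
  \sum_(w : config h | E w) config_prob p11 p10 p01 p00 w.

Definition sig_a h (w : config h) (x : 'I_2) : h.-tuple bool :=
  [tuple (w (x, j)).1 | j < h].
Definition sig_b h (w : config h) (x : 'I_2) : h.-tuple bool :=
  [tuple (w (x, j)).2 | j < h].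

Definition hamming h (s t : h.-tuple bool) : nat :=
  #|[set j : 'I_h | tnth s j != tnth t j]|.

Definition event_EM h (w : config h) : bool :=
  (hamming (sig_a w vv) (sig_b w vu) <= hamming (sig_a w vu) (sig_b w vu))%N
  || (hamming (sig_a w vu) (sig_b w vv) <= hamming (sig_a w vv) (sig_b w vv))%N.

Definition rho (R : realType) (p11 p10 p01 p00 : R) : R :=
  Num.sqrt (p00 * (p11 + p10) + p11 * (p01 + p00))
  - Num.sqrt (p10 * (p01 + p00) + p01 * (p11 + p10)).

(* Main.v *)
Require Import Defs.
From HB Require Import structures.
From mathcomp Require Import all_boot all_order all_algebra.
From mathcomp Require Import reals.
From mathcomp.analysis Require Import sequences exp.
From mathcomp Require Import zify ring lra.
Import Order.TTheory GRing.Theory Num.Theory.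
Local Open Scope ring_scope.

Definition T4 := ((bool * bool) * (bool * bool))%type.

Definition phi {h} (x : 'I_2) (F : {ffun 'I_h -> T4}) : config h :=
  [ffun k => if k.1 == x then (F k.2).1 else (F k.2).2].
Definition psi {h} (x y : 'I_2) (w : config h) : {ffun 'I_h -> T4} :=
  [ffun j => (w (x, j), w (y, j))].

Lemma other2 {i x y : 'I_2} : x != y -> i != x -> i = y.
Proof.
move=> xy ix; apply/val_inj; move: xy ix; rewrite -!(inj_eq val_inj) /=.
have := ltn_ord i; have := ltn_ord x; have := ltn_ord y; lia.
Qed.

Lemma prod_pair (R : realType) (I J : finType) (g : I * J -> R) :
  \prod_(p : I * J) g p = \prod_(i : I) \prod_(j : J) g (i, j).
Proof. by rewrite pair_bigA; apply: eq_bigr => -[]. Qed.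

Lemma sum_pair (R : realType) (I J : finType) (g : I * J -> R) :
  \sum_(p : I * J) g p = \sum_(i : I) \sum_(j : J) g (i, j).
Proof. by rewrite pair_bigA; apply: eq_bigr => -[]. Qed.

Lemma sum_phi (R : realType) h (x y : 'I_2) (Q : config h -> R) : x != y ->
  \sum_(w : config h) Q w = \sum_(F : {ffun 'I_h -> T4}) Q (phi x F).
Proof.
move=> xy; rewrite (reindex (@phi h x)) //; apply: onW_bij.
exists (psi x y).
- move=> F; apply/ffunP => j; rewrite !ffunE /= eqxx.
  rewrite eq_sym (negbTE xy); by case: (F j).
- move=> w; apply/ffunP => -[i j]; rewrite !ffunE /=.
  case: eqP => [-> //|/eqP ix]; by rewrite (other2 xy ix).
Qed.

Lemma prob_phi (R : realType) (p11 p10 p01 p00 : R) h (x y : 'I_2) F : x != y ->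
  config_prob p11 p10 p01 p00 (phi x F) =
  \prod_(j < h) (pair_prob p11 p10 p01 p00 (F j).1 * pair_prob p11 p10 p01 p00 (F j).2).
Proof.
move=> xy; rewrite /config_prob prod_pair exchange_big /=.
apply: eq_bigr => j _.
rewrite (bigD1 x) //= ffunE /= eqxx; congr (_ * _).
have yx : y != x by rewrite eq_sym.
rewrite (big_pred1 y) ?ffunE /= ?(negbTE yx) //.
move=> i /=; apply/idP/idP.
  by move=> ix; rewrite (other2 xy ix).
by move/eqP->; rewrite eq_sym.
Qed.

Lemma factor (R : realType) h (H : T4 -> R) :
  \sum_(F : {ffun 'I_h -> T4}) \prod_(j < h) H (F j) = (\sum_o H o) ^+ h.
Proof.
rewrite -(bigA_distr_bigA (fun _ o => H o)) /=.
by rewrite prodr_const card_ord.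
Qed.

Definition E1 {h} (x y : 'I_2) (w : config h) : bool :=
  (hamming (sig_a w y) (sig_b w x) <= hamming (sig_a w x) (sig_b w x))%N.
Definition X1 (o : T4) : bool := o.2.1 != o.1.2.
Definition Y1 (o : T4) : bool := o.1.1 != o.1.2.

Lemma ham1 h (x y : 'I_2) (F : {ffun 'I_h -> T4}) : x != y ->
  hamming (sig_a (phi x F) y) (sig_b (phi x F) x) = #|[set j | X1 (F j)]|.
Proof.
move=> xy; have yx : y != x by rewrite eq_sym.
rewrite /hamming; apply: eq_card => j.
by rewrite !inE !tnth_mktuple !ffunE /= eqxx (negbTE yx).
Qed.

Lemma ham2 h (x : 'I_2) (F : {ffun 'I_h -> T4}) :
  hamming (sig_a (phi x F) x) (sig_b (phi x F) x) = #|[set j | Y1 (F j)]|.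
Proof.
rewrite /hamming; apply: eq_card => j.
by rewrite !inE !tnth_mktuple !ffunE /= eqxx.
Qed.

Lemma pp_ge0 (R : realType) (p11 p10 p01 p00 : R) o :
  0 <= p11 -> 0 <= p10 -> 0 <= p01 -> 0 <= p00 ->
  0 <= pair_prob p11 p10 p01 p00 o.
Proof. by case: o => [[] []]. Qed.

Lemma E1_bound (R : realType) (p11 p10 p01 p00 : R) h (x y : 'I_2) (G : T4 -> R) :
  0 <= p11 -> 0 <= p10 -> 0 <= p01 -> 0 <= p00 -> x != y ->
  (forall o, 0 <= G o) ->
  (forall F : {ffun 'I_h -> T4},
     (#|[set j | X1 (F j)]| <= #|[set j | Y1 (F j)]|)%N ->
     \prod_j (pair_prob p11 p10 p01 p00 (F j).1 * pair_prob p11 p10 p01 p00 (F j).2) != 0 ->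
     1 <= \prod_j G (F j)) ->
  \sum_(w : config h | E1 x y w) config_prob p11 p10 p01 p00 w <=
  (\sum_o pair_prob p11 p10 p01 p00 o.1 * pair_prob p11 p10 p01 p00 o.2 * G o) ^+ h.
Proof.
move=> h11 h10 h01 h00 xy G0 HG.
rewrite -factor big_mkcond (@sum_phi _ h x y _ xy) /=.
apply: ler_sum => F _.
have P0 : 0 <= \prod_j (pair_prob p11 p10 p01 p00 (F j).1 * pair_prob p11 p10 p01 p00 (F j).2).
  by apply: prodr_ge0 => j _; apply: mulr_ge0; apply: pp_ge0.
have R0 : 0 <= \prod_j (pair_prob p11 p10 p01 p00 (F j).1 * pair_prob p11 p10 p01 p00 (F j).2 * G (F j)).
  by apply: prodr_ge0 => j _; rewrite !mulr_ge0 //; apply: pp_ge0.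
case: ifP => // hE.
rewrite (@prob_phi _ p11 p10 p01 p00 h x y F xy).
have [->|nz] := eqVneq (\prod_j (pair_prob p11 p10 p01 p00 (F j).1 * pair_prob p11 p10 p01 p00 (F j).2)) 0 => //.
rewrite [X in _ <= X]big_split /= -[X in X <= _]mulr1.
apply: ler_wpM2l => //.
apply: HG nz; move: hE; by rewrite /E1 ham1 // ham2.
Qed.

Definition Gw {R : realType} (a b : R) (o : T4) : R :=
  (if X1 o && ~~ Y1 o then a else 1) * (if ~~ X1 o && Y1 o then b else 1).

Lemma sumG (R : realType) (p11 p10 p01 p00 a b : R) :
  p11 + p10 + p01 + p00 = 1 ->
  \sum_o pair_prob p11 p10 p01 p00 o.1 * pair_prob p11 p10 p01 p00 o.2 * Gw a b o =
  1 + (a - 1) * (p00 * (p11 + p10) + p11 * (p01 + p00))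
    + (b - 1) * (p10 * (p01 + p00) + p01 * (p11 + p10)).
Proof.
move=> hs.
rewrite sum_pair; under eq_bigr do rewrite sum_pair.
rewrite !sum_pair !big_bool /= /Gw /X1 /Y1 /=.
have -> : p00 = 1 - p11 - p10 - p01 by rewrite -hs; ring.
ring.
Qed.

Lemma prodGw (R : realType) h (a b : R) (F : {ffun 'I_h -> T4}) :
  \prod_j Gw a b (F j) =
  a ^+ #|[set j | X1 (F j)] :\: [set j | Y1 (F j)]|
  * b ^+ #|[set j | Y1 (F j)] :\: [set j | X1 (F j)]|.
Proof.
rewrite big_split /= -!prodr_const; congr (_ * _); rewrite [RHS]big_mkcond /=;
  apply: eq_bigr => j _; rewrite !inE //.
by rewrite andbC.
Qed.

Lemma card_diff {h} {F : {ffun 'I_h -> T4}} :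
  (#|[set j | X1 (F j)]| <= #|[set j | Y1 (F j)]|)%N ->
  (#|[set j | X1 (F j)] :\: [set j | Y1 (F j)]|
   <= #|[set j | Y1 (F j)] :\: [set j | X1 (F j)]|)%N.
Proof.
have := cardsID [set j | Y1 (F j)] [set j | X1 (F j)].
have := cardsID [set j | X1 (F j)] [set j | Y1 (F j)].
rewrite setIC; lia.
Qed.

Lemma Bzero {R : realType} {p11 p10 p01 p00 : R} (o : T4) :
  0 <= p11 -> 0 <= p10 -> 0 <= p01 -> 0 <= p00 ->
  p10 * (p01 + p00) + p01 * (p11 + p10) = 0 ->
  ~~ X1 o && Y1 o ->
  pair_prob p11 p10 p01 p00 o.1 * pair_prob p11 p10 p01 p00 o.2 = 0.
Proof.
move=> h11 h10 h01 h00 hB.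
have e1 : p10 * p01 = 0 by apply/eqP; rewrite eq_le mulr_ge0 // andbT; nra.
have e2 : p10 * p00 = 0 by apply/eqP; rewrite eq_le mulr_ge0 // andbT; nra.
have e3 : p01 * p11 = 0 by apply/eqP; rewrite eq_le mulr_ge0 // andbT; nra.
have e4 : p01 * p10 = 0 by rewrite mulrC.
by case: o => [[[] []] [[] []]]; rewrite /X1 /Y1 /=.
Qed.

Lemma E1_final (R : realType) (p11 p10 p01 p00 : R) h (x y : 'I_2) :
  0 <= p11 -> 0 <= p10 -> 0 <= p01 -> 0 <= p00 ->
  p11 + p10 + p01 + p00 = 1 ->
  0 <= rho p11 p10 p01 p00 -> x != y ->
  \sum_(w : config h | E1 x y w) config_prob p11 p10 p01 p00 w <=
  (1 - (rho p11 p10 p01 p00) ^+ 2) ^+ h.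
Proof.
move=> h11 h10 h01 h00 hs hr xy.
set A := p00 * (p11 + p10) + p11 * (p01 + p00).
set B := p10 * (p01 + p00) + p01 * (p11 + p10).
have A0 : 0 <= A by rewrite /A; apply: addr_ge0; apply: mulr_ge0 => //; apply: addr_ge0.
have B0 : 0 <= B by rewrite /B; apply: addr_ge0; apply: mulr_ge0 => //; apply: addr_ge0.
have hA1 : A <= 1.
  have e : p00 = 1 - p11 - p10 - p01 by rewrite -hs; ring.
  rewrite /A e; move: e => e; nra.
have eA := sqr_sqrtr A0; have eB := sqr_sqrtr B0.
have sA0 : 0 <= Num.sqrt A by apply: sqrtr_ge0.
have sB0 : 0 <= Num.sqrt B by apply: sqrtr_ge0.
have hrho : rho p11 p10 p01 p00 = Num.sqrt A - Num.sqrt B by [].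
rewrite hrho in hr *.
have [Bz|Bp] := eqVneq B 0.
- have -> : Num.sqrt B = 0 by rewrite Bz sqrtr0.
  have := @E1_bound R p11 p10 p01 p00 h x y (Gw 0 1) h11 h10 h01 h00 xy.
  rewrite sumG //.
  move=> H; apply: le_trans (H _ _) _.
  + by move=> o; rewrite /Gw; case: ifP => _; case: ifP => _; rewrite ?mul0r ?mul1r ?mulr1 ?ler01 ?lexx.
  + move=> F hc nz; rewrite prodGw.
    have c0 : #|[set j | Y1 (F j)] :\: [set j | X1 (F j)]| = 0%N.
      apply/eqP; rewrite cards_eq0; apply/eqP/setP => j; rewrite !inE.
      apply/negbTE/negP => /andP [nx yy].
      move: nz; rewrite prodf_seq_neq0 => /allP /(_ j (mem_index_enum j)) /=.
      by rewrite (Bzero (F j) h11 h10 h01 h00 Bz) ?eqxx // nx yy.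
    have := card_diff hc; rewrite c0 leqn0 => /eqP ->.
    by rewrite !expr0 mulr1.
  + rewrite -/A -/B Bz subr0 eA; apply: lerXn2r; rewrite ?nnegrE //; lra.
- have Bp' : 0 < B by rewrite lt_def Bp.
  have sBp : 0 < Num.sqrt B by rewrite sqrtr_gt0.
  have sAp : 0 < Num.sqrt A by lra.
  set a := Num.sqrt B / Num.sqrt A.
  set b := Num.sqrt A / Num.sqrt B.
  have a0 : 0 <= a by rewrite /a divr_ge0 // ltW.
  have b1 : 1 <= b by rewrite /b ler_pdivlMr // mul1r; lra.
  have ab : a * b = 1 by rewrite /a /b; field; rewrite ?gt_eqF //; lra.
  have := @E1_bound R p11 p10 p01 p00 h x y (Gw a b) h11 h10 h01 h00 xy.
  rewrite sumG //.
  move=> H; apply: le_trans (H _ _) _.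
  + move=> o; rewrite /Gw; case: ifP => _; case: ifP => _; rewrite ?mul0r ?mul1r ?mulr1 ?ler01 //; lra.
  + move=> F hc nz; rewrite prodGw.
    have := card_diff hc; move: (#|_ :\: _|) (#|_ :\: _|) => m n mn.
    rewrite -(subnK mn) exprD mulrCA -exprMn ab expr1n mulr1.
    exact: exprn_ege1.
  + rewrite -/A -/B le_eqVlt; apply/orP; left; apply/eqP.
    have key : forall sa sb : R, 0 < sa -> 0 < sb ->
      1 + (sb / sa - 1) * sa ^+ 2 + (sa / sb - 1) * sb ^+ 2 = 1 - (sa - sb) ^+ 2.
      by move=> sa sb ha hb; field; rewrite ?gt_eqF.
    by have := key _ _ sAp sBp; rewrite eA eB => ->.
Qed.

Theorem lemma4p9 (R : realType) (h : nat) (p11 p10 p01 p00 : R) :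
  0 <= p11 -> 0 <= p10 -> 0 <= p01 -> 0 <= p00 ->
  p11 + p10 + p01 + p00 = 1 ->
  0 <= rho p11 p10 p01 p00 ->
  Pr p11 p10 p01 p00 (@event_EM h)
    <= 2 * expR (- (h%:R * (rho p11 p10 p01 p00) ^+ 2)).
Proof.
move=> h11 h10 h01 h00 hs hr.
have uv : vu != vv by [].
have vu' : vv != vu by [].
have cp0 : forall w : config h, 0 <= config_prob p11 p10 p01 p00 w.
  by move=> w; apply: prodr_ge0 => k _; apply: pp_ge0.
have H1 := @E1_final R p11 p10 p01 p00 h vu vv h11 h10 h01 h00 hs hr uv.
have H2 := @E1_final R p11 p10 p01 p00 h vv vu h11 h10 h01 h00 hs hr vu'.
rewrite /Pr.
apply: le_trans (_ : \sum_(w : config h | E1 vu vv w) config_prob p11 p10 p01 p00 w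
   + \sum_(w : config h | E1 vv vu w) config_prob p11 p10 p01 p00 w <= _).
  rewrite [X in X <= _]big_mkcond [X in _ <= X + _]big_mkcond [X in _ <= _ + X]big_mkcond.
  rewrite -big_split /=; apply: ler_sum => w _.
  have -> : event_EM w = E1 vu vv w || E1 vv vu w by [].
  have := cp0 w.
  by case: (E1 vu vv w); case: (E1 vv vu w) => /=; lra.
apply: le_trans (lerD H1 H2) _.
set r := rho p11 p10 p01 p00.
have r2 : r ^+ 2 <= 1.
  have A0 : 0 <= p00 * (p11 + p10) + p11 * (p01 + p00).
    by apply: addr_ge0; apply: mulr_ge0 => //; apply: addr_ge0.
  have hA1 : p00 * (p11 + p10) + p11 * (p01 + p00) <= 1.
    have e : p00 = 1 - p11 - p10 - p01 by rewrite -hs; ring.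
    rewrite e; move: e => e; nra.
  have eA := sqr_sqrtr A0.
  have sB0 : 0 <= Num.sqrt (p10 * (p01 + p00) + p01 * (p11 + p10)) by apply: sqrtr_ge0.
  move: hr; rewrite /r /rho => hr; nra.
have e1 : 1 - r ^+ 2 <= expR (- r ^+ 2) by have := expR_ge1Dx (- r ^+ 2); lra.
have e2 : (1 - r ^+ 2) ^+ h <= expR (- (h%:R * r ^+ 2)).
  rewrite -[X in expR X]mulrN expRM_natl; apply: lerXn2r; rewrite ?nnegrE //; first lra.
  by apply: ltW; apply: expR_gt0.
lra.
Qed.
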